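(* The splitting graph $\mathrm{Spltg}(B_G)$ of the bull graph $B_G$ admits a signed product cordial labeling.
   Context: A graph $G$ is signed product cordial if there is a vertex labeling $\alpha: V(G)\to\{1,-1\}$ such that, with the induced edge labeling $\alpha^*(uv)=\alpha(u)\alpha(v)$, we have $|v_\alpha(-1)-v_\alpha(1)|\le 1$ and $|e_{\alpha^*}(-1)-e_{\alpha^*}(1)|\le 1$. Here $v_\alpha(x)$ is the number of vertices labeled $x$ and $e_{\alpha^*}(x)$ is the number of edges labeled $x$; such an $\alpha$ is called a signed product cordial labeling. The splitting graph $\mathrm{Spltg}(G)$ of a graph $G$ is obtained from $G$ by adding, for each vertex $v$ of $G$, a new vertex $v'$ made adjacent to exactly the neighbors of $v$ in $G$. The bull graph $B_G$ has vertices $v_1,\dots,v_5$ and edges $v_1v_2, v_2v_3, v_3v_4, v_4v_5, v_2v_4$. Equivalently, it is a triangle $v_2v_3v_4$ with a pendant vertex attached at $v_2$ and another at $v_4$. *)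

(* Defs.v *)
From mathcomp Require Import all_boot all_order all_algebra.
Set Implicit Arguments. Unset Strict Implicit. Unset Printing Implicit Defensive.
Import Order.TTheory GRing.Theory Num.Theory.
Local Open Scope ring_scope.

Record sgraph := SGraph {
  vert : finType;
  adj : rel vert;
  adj_sym : symmetric adj;
  adj_irr : irreflexive adj }.

Definition edges (G : sgraph) : {set {set vert G}} :=
  [set [set u; v] | u in vert G, v in vert G & adj u v].

Definition vcount (G : sgraph) (alpha : vert G -> int) (x : int) : nat :=
  #|[set v : vert G | alpha v == x]|.

Definition ecount (G : sgraph) (alpha : vert G -> int) (x : int) : nat :=
  #|[set E in edges G | [exists u, exists v,
       [&& E == [set u; v], adj u v & alpha u * alpha v == x]]]|.

Definition signed_product_cordial_labeling (G : sgraph) (alpha : vert G -> int) :=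
  [/\ forall v, alpha v = 1 \/ alpha v = -1,
      `|(vcount alpha (-1))%:Z - (vcount alpha 1)%:Z| <= 1
    & `|(ecount alpha (-1))%:Z - (ecount alpha 1)%:Z| <= 1].

Definition signed_product_cordial (G : sgraph) :=
  exists alpha : vert G -> int, signed_product_cordial_labeling alpha.

(* Splitting graph: vertices inl v (original) and inr v (new vertex v');
   inl u ~ inl w iff u ~ w in G; v' = inr v is adjacent to exactly the
   (original) neighbours of v; no edges among new vertices. *)
Definition splt_adj (G : sgraph) : rel (vert G + vert G) :=
  fun x y => match x, y with
  | inl u, inl w => adj u w
  | inl u, inr w => adj w u
  | inr u, inl w => adj u w
  | inr _, inr _ => false
  end.

Lemma splt_adj_sym G : symmetric (@splt_adj G).
Proof. by move=> [u|u] [w|w] //=; rewrite adj_sym. Qed.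

Lemma splt_adj_irr G : irreflexive (@splt_adj G).
Proof. by move=> [u|u] //=; rewrite adj_irr. Qed.

Definition Spltg (G : sgraph) : sgraph :=
  SGraph (@splt_adj_sym G) (@splt_adj_irr G).

(* Bull graph on 'I_5 with v1..v5 = 0..4:
   edges v1v2, v2v3, v3v4, v4v5, v2v4. *)
Definition bull_edge (i j : 'I_5) : bool :=
  let a := nat_of_ord i in let b := nat_of_ord j in
  (a, b) \in [:: (0,1); (1,2); (2,3); (3,4); (1,3)]%N.

Definition bull_adj : rel 'I_5 := fun i j => bull_edge i j || bull_edge j i.

Lemma bull_adj_sym : symmetric bull_adj.
Proof. by move=> i j; rewrite /bull_adj orbC. Qed.

Lemma bull_adj_irr : irreflexive bull_adj.
Proof. by move=> [[|[|[|[|[|]]]]] ?]. Qed.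

Definition bull : sgraph := SGraph bull_adj_sym bull_adj_irr.

(* Main.v *)
Require Import Defs.
From mathcomp Require Import all_boot all_order all_algebra.
From mathcomp Require Import zify.

Import GRing.Theory.
Local Open Scope ring_scope.

Definition lab (x : vert (Spltg bull)) : int :=
  match x with
  | inl i => if nat_of_ord i == 4%N then (-1)%R else 1%R
  | inr i => if nat_of_ord i == 1%N then 1%R else (-1)%R
  end.

Definition code (x : vert (Spltg bull)) : nat :=
  match x with inl i => nat_of_ord i | inr i => (5 + nat_of_ord i)%N end.

Lemma code_inj : injective code.
Proof.
move=> [i|i] [j|j] /=.
- by move=> h; congr inl; apply: val_inj.
- by move=> h; have := ltn_ord i; lia.
- by move=> h; have := ltn_ord j; lia.
- by move=> h; congr inr; apply: val_inj => /=; lia.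
Qed.

Lemma ecount_eq x : ecount lab x =
  #|[set p : vert (Spltg bull) * vert (Spltg bull) |
      [&& adj p.1 p.2, lab p.1 * lab p.2 == x & (code p.1 < code p.2)%N]]|.
Proof.
rewrite /ecount -(@card_in_imset _ _ (fun p => [set p.1; p.2])).
  apply: eq_card => E; rewrite !inE; apply/andP/imsetP.
  - case=> _ /existsP[u /existsP[v /and3P[/eqP-> huv hl]]].
    case: (ltngtP (code u) (code v)) => h.
    + by exists (u, v) => //; rewrite inE; apply/and3P; split.
    + exists (v, u); last by rewrite /= setUC.
      have huv' : adj v u by rewrite adj_sym.
      rewrite inE; apply/and3P; split; [exact: huv' | by rewrite /= mulrC | exact: h].
    + by move/code_inj: h => h; rewrite h adj_irr in huv.
  - case=> [[u v]]; rewrite inE /= => /and3P[huv hl hc] ->; split.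
    + by apply/imset2P; exists u v; rewrite ?inE.
    + by apply/existsP; exists u; apply/existsP; exists v; rewrite eqxx huv hl.
move=> [a b] [c d]; rewrite !inE /= => /and3P[_ _ hab] /and3P[_ _ hcd] e.
have ha : a \in [set c; d] by rewrite -e !inE eqxx.
have hb : b \in [set c; d] by rewrite -e !inE eqxx orbT.
have hc : c \in [set a; b] by rewrite e !inE eqxx.
move: ha hb hc; rewrite !inE => /orP[]/eqP ha /orP[]/eqP hb /orP[]/eqP hc;
  subst; rewrite ?ltnn in hab hcd *; try done;
  by move: (ltn_trans hab hcd); rewrite ltnn.
Qed.

Lemma vc x : vcount lab x =
  (\sum_(i < 5) (if lab (inl i) == x then 1 else 0) +
   \sum_(i < 5) (if lab (inr i) == x then 1 else 0))%N.
Proof.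
by rewrite /vcount cardsE -sum1_card big_mkcond big_sumType.
Qed.

Lemma vc1 : vcount lab (-1) = 5%N.
Proof. by rewrite vc !big_ord_recl !big_ord0. Qed.
Lemma vc2 : vcount lab 1 = 5%N.
Proof. by rewrite vc !big_ord_recl !big_ord0. Qed.

Lemma ec x : ecount lab x =
  (\sum_(a : vert (Spltg bull)) \sum_(b : vert (Spltg bull))
     (if [&& adj a b, (lab a * lab b)%R == x & (code a < code b)%N] then 1 else 0))%N.
Proof.
by rewrite ecount_eq cardsE -sum1_card big_mkcond pair_bigA.
Qed.

Lemma ec1 : ecount lab (-1) = 7%N.
Proof.
rewrite ec big_sumType !big_ord_recl !big_ord0.
by rewrite !big_sumType !big_ord_recl !big_ord0.
Qed.
Lemma ec2 : ecount lab 1 = 8%N.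
Proof.
rewrite ec big_sumType !big_ord_recl !big_ord0.
by rewrite !big_sumType !big_ord_recl !big_ord0.
Qed.

Theorem theorem2p2 : signed_product_cordial (Spltg bull).
Proof.
exists lab; split.
- by case=> [[[|[|[|[|[|]]]]] ?]|[[|[|[|[|[|]]]]] ?]]; (left; reflexivity) || (right; reflexivity) || (exfalso; done).
- by rewrite vc1 vc2.
- by rewrite ec1 ec2.
Qed.
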